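(* Let $n=5$, $I_1=\{1,2,3,4\}$, $I_2=\{1,2,3,5\}$, and $f=f_1+f_2$ with $$f_1=x_4^2(x_1^4x_2^2+x_2^4x_3^2+x_1^2x_3^4-3x_1^2x_2^2x_3^2)+x_3^8,\qquad f_2=x_1^2x_2^2x_3^2x_5^2.$$ Let $H_1:=(x_1^2+x_2^2+x_3^2+x_4^2)(x_1^2+x_2^2+x_3^2)$ and $H_2:=(x_1^2+x_2^2+x_3^2+x_5^2)(x_1^2+x_2^2+x_3^2)$. Then: (1) $f$ is a nonnegative form of degree $8$ which is not positive definite; (2) there are no $\sigma_1\in\Sigma[x(I_1)]$, $\sigma_2\in\Sigma[x(I_2)]$ with $f=\sigma_1+\sigma_2$; but there exist $\sigma_1\in\Sigma[x(I_1)]_6$, $\sigma_2\in\Sigma[x(I_2)]_6$ with $f=\sigma_1/H_1+\sigma_2/H_2$.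
   Context: For $T\subseteq\{1,\dots,n\}$, $x(T)=(x_i)_{i\in T}$; $\Sigma[x(T)]$ is the set of sums of squares of polynomials in the variables $x(T)$, and $\Sigma[x(T)]_t$ those sums of squares of polynomials of degree at most $t$. A form is positive definite if it is positive at every nonzero point. *)

(* Defs.v *)
(* real polynomials in variables x_1..x_5, represented as
   polynomial functions on points x : nat -> R (only x 1, ..., x 5 matter). *)
From Stdlib Require Import Reals List.
Import ListNotations.
Open Scope R_scope.

Definition point := nat -> R.

(* monomial prod_{i in T} x_i^(a i); exponents outside T are ignored,
   so the monomial only involves the variables x(T). *)
Definition monom (T : list nat) (a : nat -> nat) (x : point) : R :=
  fold_right (fun i acc => x i ^ a i * acc) 1 T.

Definition mdeg (T : list nat) (a : nat -> nat) : nat :=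
  fold_right (fun i acc => (a i + acc)%nat) 0%nat T.

Definition peval (T : list nat) (p : list (R * (nat -> nat))) (x : point) : R :=
  fold_right (fun c acc => fst c * monom T (snd c) x + acc) 0 p.

Definition is_poly_deg (T : list nat) (t : nat) (g : point -> R) : Prop :=
  exists p : list (R * (nat -> nat)),
    Forall (fun c => (mdeg T (snd c) <= t)%nat) p /\
    forall x, g x = peval T p x.

Definition SOS_deg (T : list nat) (t : nat) (s : point -> R) : Prop :=
  exists gs : list (point -> R),
    Forall (is_poly_deg T t) gs /\
    forall x, s x = fold_right (fun g acc => g x ^ 2 + acc) 0 gs.

Definition SOS (T : list nat) (s : point -> R) : Prop := exists t, SOS_deg T t s.

Definition I1 : list nat := [1; 2; 3; 4]%nat.
Definition I2 : list nat := [1; 2; 3; 5]%nat.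

Definition f1 (x : point) : R :=
  x 4%nat ^ 2 * (x 1%nat ^ 4 * x 2%nat ^ 2 + x 2%nat ^ 4 * x 3%nat ^ 2
                 + x 1%nat ^ 2 * x 3%nat ^ 4
                 - 3 * x 1%nat ^ 2 * x 2%nat ^ 2 * x 3%nat ^ 2)
  + x 3%nat ^ 8.

Definition f2 (x : point) : R :=
  x 1%nat ^ 2 * x 2%nat ^ 2 * x 3%nat ^ 2 * x 5%nat ^ 2.

Definition fpoly (x : point) : R := f1 x + f2 x.

Definition H1 (x : point) : R :=
  (x 1%nat ^ 2 + x 2%nat ^ 2 + x 3%nat ^ 2 + x 4%nat ^ 2)
  * (x 1%nat ^ 2 + x 2%nat ^ 2 + x 3%nat ^ 2).

Definition H2 (x : point) : R :=
  (x 1%nat ^ 2 + x 2%nat ^ 2 + x 3%nat ^ 2 + x 5%nat ^ 2)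
  * (x 1%nat ^ 2 + x 2%nat ^ 2 + x 3%nat ^ 2).

Definition nonzero5 (x : point) : Prop :=
  exists i, (1 <= i <= 5)%nat /\ x i <> 0.

Definition pos_def (g : point -> R) : Prop :=
  forall x, nonzero5 x -> 0 < g x.

(* Main.v *)
Require Import Defs.
From Stdlib Require Import Reals List Lra Lia Psatz Arith.
Import ListNotations.
Open Scope R_scope.

Fixpoint deval (l : list R) (t : R) : R :=
  match l with [] => 0 | c :: l' => c + t * deval l' t end.

Definition UPf (q : R -> R) : Prop := exists l, forall t, q t = deval l t.

Fixpoint ladd (l m : list R) : list R :=
  match l, m with
  | [], _ => m
  | _, [] => l
  | a :: l', b :: m' => (a + b) :: ladd l' m'
  end.

Lemma deval_ladd l m t : deval (ladd l m) t = deval l t + deval m t.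
Proof.
  revert m; induction l as [|a l IH]; intros [|b m]; simpl; try ring.
  rewrite IH; ring.
Qed.

Definition lscal (c : R) (l : list R) := map (Rmult c) l.
Lemma deval_lscal c l t : deval (lscal c l) t = c * deval l t.
Proof. induction l as [|a l IH]; simpl; [ring|]. rewrite IH; ring. Qed.

Fixpoint lmul (l m : list R) : list R :=
  match l with [] => [] | a :: l' => ladd (lscal a m) (0 :: lmul l' m) end.
Lemma deval_lmul l m t : deval (lmul l m) t = deval l t * deval m t.
Proof.
  induction l as [|a l IH]; simpl; [ring|].
  rewrite deval_ladd, deval_lscal; simpl; rewrite IH; ring.
Qed.

Lemma UPf_ext q q' : (forall t, q t = q' t) -> UPf q' -> UPf q.
Proof. intros H [l Hl]; exists l; intro t; rewrite H; auto. Qed.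
Lemma UPf_const c : UPf (fun _ => c).
Proof. exists [c]; intro; simpl; ring. Qed.
Lemma UPf_lin a b : UPf (fun t => a + b * t).
Proof. exists [a; b]; intro; simpl; ring. Qed.
Lemma UPf_add q r : UPf q -> UPf r -> UPf (fun t => q t + r t).
Proof. intros [l Hl] [m Hm]; exists (ladd l m); intro; rewrite deval_ladd, Hl, Hm; auto. Qed.
Lemma UPf_mul q r : UPf q -> UPf r -> UPf (fun t => q t * r t).
Proof. intros [l Hl] [m Hm]; exists (lmul l m); intro; rewrite deval_lmul, Hl, Hm; auto. Qed.
Lemma UPf_sub q r : UPf q -> UPf r -> UPf (fun t => q t - r t).
Proof.
  intros Hq Hr. apply UPf_ext with (fun t => q t + (-1) * r t).
  intro; ring. apply UPf_add; auto. apply UPf_mul; auto. apply UPf_const.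
Qed.
Lemma UPf_pow q n : UPf q -> UPf (fun t => q t ^ n).
Proof.
  intro H; induction n; simpl.
  - apply UPf_const.
  - apply UPf_mul; auto.
Qed.

Lemma deval_bound_inf l : exists K, 0 <= K /\ forall t, 1 <= t ->
  Rabs (deval l t) <= K * t ^ (pred (length l)).
Proof.
  induction l as [|c l [K [HK IH]]].
  - exists 0; split; [lra|]; intros; simpl; rewrite Rabs_R0; lra.
  - exists (Rabs c + K); split; [pose proof (Rabs_pos c); lra|].
    intros t Ht; simpl.
    destruct l as [|d l'].
    + simpl. replace (c + t * 0) with c by ring. pose proof (Rabs_pos c). lra.
    + specialize (IH t Ht).
      change (pred (length (c :: d :: l'))) with (S (pred (length (d :: l')))).
      change (deval (c :: d :: l') t) with (c + t * deval (d :: l') t).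
      set (D := deval (d :: l') t) in *. set (P := t ^ pred (length (d :: l'))) in *.
      pose proof (Rabs_triang c (t * D)).
      rewrite Rabs_mult, (Rabs_right t) in H by lra.
      assert (1 <= P) by (apply pow_R1_Rle; lra).
      simpl. fold P.
      pose proof (Rabs_pos c). pose proof (Rabs_pos D).
      assert (1 <= t * P) by nra.
      assert (Rabs c <= Rabs c * (t * P)) by nra.
      assert (t * Rabs D <= t * (K * P)) by (apply Rmult_le_compat_l; lra).
      change (t ^ length l') with P. nra.
Qed.

Lemma deval_bound_zero l : exists K, 0 <= K /\ forall t, Rabs t <= 1 ->
  Rabs (deval l t) <= K.
Proof.
  induction l as [|c l [K [HK IH]]].
  - exists 0; split; [lra|]; intros; simpl; rewrite Rabs_R0; lra.
  - exists (Rabs c + K); split; [pose proof (Rabs_pos c); lra|].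
    intros t Ht; simpl.
    pose proof (Rabs_triang c (t * deval l t)).
    rewrite Rabs_mult in H.
    specialize (IH t Ht). pose proof (Rabs_pos (deval l t)). pose proof (Rabs_pos t).
    nra.
Qed.

Lemma small_zero c K : (forall t, 0 < t <= 1 -> Rabs c <= K * t) -> c = 0.
Proof.
  intro H. destruct (Req_dec c 0) as [|Hc]; auto. exfalso.
  assert (Hp : 0 < Rabs c) by (apply Rabs_pos_lt; auto).
  assert (HK : 0 <= K) by (specialize (H 1 ltac:(lra)); lra).
  set (t := Rabs c / (2 * (K + 1) + Rabs c)).
  assert (Ht : 0 < t <= 1).
  { unfold t; split. apply Rdiv_lt_0_compat; lra.
    apply Rle_trans with (Rabs c / Rabs c).
    apply Rmult_le_compat_l; [lra|]. apply Rinv_le_contravar; lra.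
    unfold Rdiv; rewrite Rinv_r; lra. }
  specialize (H t Ht). unfold t in H.
  assert (K * (Rabs c / (2 * (K + 1) + Rabs c)) < Rabs c).
  { unfold Rdiv. rewrite <- Rmult_assoc.
    apply Rmult_lt_reg_r with (2 * (K + 1) + Rabs c). lra.
    rewrite Rmult_assoc, Rinv_l by lra. nra. }
  lra.
Qed.

Lemma big_zero c K : (forall t, 1 <= t -> Rabs c * t <= K) -> c = 0.
Proof.
  intro H. destruct (Req_dec c 0) as [|Hc]; auto. exfalso.
  assert (Hp : 0 < Rabs c) by (apply Rabs_pos_lt; auto).
  assert (HK : 0 <= K) by (specialize (H 1 ltac:(lra)); lra).
  specialize (H (K / Rabs c + 1)).
  assert (1 <= K / Rabs c + 1).
  { assert (0 <= K / Rabs c) by (apply Rmult_le_pos; [lra| left; apply Rinv_0_lt_compat; lra]). lra. }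
  specialize (H H0).
  rewrite Rmult_plus_distr_l in H. unfold Rdiv in H.
  replace (Rabs c * (K * / Rabs c)) with K in H by (field; lra). lra.
Qed.

Lemma deval_app l c t : deval (l ++ [c]) t = deval l t + c * t ^ length l.
Proof. induction l as [|a l IH]; simpl; [ring|]. rewrite IH; ring. Qed.

Lemma U1 : forall l m C, (forall t, 1 <= t -> Rabs (deval l t) <= C * t ^ m) ->
  forall k, (m < k)%nat -> nth k l 0 = 0.
Proof.
  intro l; induction l as [|c l IH] using rev_ind; intros m C H k Hk.
  - destruct k; reflexivity.
  - destruct (le_lt_dec (length l) m) as [Hlm|Hlm].
    + apply nth_overflow. rewrite length_app; simpl; lia.
    + assert (Hc : c = 0).
      { destruct (deval_bound_inf l) as [K [HK HB]].
        apply big_zero with (Rabs C + K). intros t Ht.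
        specialize (H t Ht). specialize (HB t Ht). rewrite deval_app in H.
        assert (Hp : 0 < t ^ pred (length l)) by (apply pow_lt; lra).
        assert (Hm : t ^ m <= t ^ pred (length l)) by (apply Rle_pow; [lra|lia]).
        assert (Hn : t ^ length l = t * t ^ pred (length l)).
        { destruct (length l) eqn:E; [lia|]. simpl; ring. }
        pose proof (Rabs_triang_inv (c * t ^ length l) (- deval l t)).
        replace (c * t ^ length l - - deval l t) with (deval l t + c * t ^ length l) in H0 by ring.
        rewrite Rabs_Ropp in H0. rewrite Rabs_mult, Hn, Rabs_mult, (Rabs_right t), (Rabs_right (t ^ _)) in H0 by lra.
        assert (C * t ^ m <= Rabs C * t ^ pred (length l)).
        { apply Rle_trans with (Rabs C * t ^ m). apply Rmult_le_compat_r. left; apply pow_lt; lra. apply Rle_abs.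
          apply Rmult_le_compat_l; [apply Rabs_pos|auto]. }
        assert (Rabs c * t * t ^ pred (length l) <= (Rabs C + K) * t ^ pred (length l)).
        { rewrite Rmult_assoc. rewrite Hn in H. lra. }
        apply Rmult_le_reg_r in H2; auto. }
      subst c.
      assert (Hl : forall k, (m < k)%nat -> nth k l 0 = 0).
      { apply IH with C. intros t Ht. specialize (H t Ht). rewrite deval_app in H.
        replace (deval l t + 0 * t ^ length l) with (deval l t) in H by ring. auto. }
      destruct (lt_dec k (length l)).
      * rewrite app_nth1 by auto. auto.
      * rewrite app_nth2 by lia. destruct (k - length l)%nat as [|[|j]]; simpl; auto; destruct j; auto.
Qed.

Lemma pow_le1 x n : 0 <= x <= 1 -> x ^ n <= 1.
Proof. intro H; induction n; simpl; [lra|]. assert (0 <= x ^ n) by (apply pow_le; lra). nra. Qed.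

Lemma U2 : forall n l C, (forall t, 0 < t <= 1 -> Rabs (deval l t) <= C * t ^ n) ->
  forall k, (k < n)%nat -> nth k l 0 = 0.
Proof.
  induction n as [|n IH]; intros l C H k Hk; [lia|].
  destruct l as [|c l]; [destruct k; reflexivity|].
  assert (Hc : c = 0).
  { destruct (deval_bound_zero l) as [K [HK HB]].
    apply small_zero with (Rabs C + K). intros t Ht.
    specialize (H t Ht). simpl in H.
    assert (Rabs t <= 1) by (rewrite Rabs_right; lra).
    specialize (HB t H0).
    pose proof (Rabs_triang_inv c (- (t * deval l t))).
    replace (c - - (t * deval l t)) with (c + t * deval l t) in H1 by ring.
    rewrite Rabs_Ropp, Rabs_mult, (Rabs_right t) in H1 by lra.
    assert (t ^ S n <= t) by (simpl; assert (t ^ n <= 1) by (apply pow_le1; lra);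
       assert (0 <= t^n) by (apply pow_le; lra); nra).
    assert (C * t ^ S n <= Rabs C * t).
    { apply Rle_trans with (Rabs C * t ^ S n).
      apply Rmult_le_compat_r. apply pow_le; lra. apply Rle_abs.
      apply Rmult_le_compat_l; auto. apply Rabs_pos. }
    change (t ^ S n) with (t * t ^ n) in H2, H3.
    assert (t * Rabs (deval l t) <= t * K) by (apply Rmult_le_compat_l; lra).
    lra. }
  subst c. destruct k as [|k]; [reflexivity|]. simpl.
  apply IH with C; [|lia].
  intros t Ht. specialize (H t Ht). simpl in H.
  replace (0 + t * deval l t) with (t * deval l t) in H by ring.
  rewrite Rabs_mult, (Rabs_right t) in H by lra.
  simpl in H. apply Rmult_le_reg_l with t; lra.
Qed.

Lemma deval_zero l : (forall k, nth k l 0 = 0) -> forall t, deval l t = 0.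
Proof.
  induction l as [|c l IH]; intros H t; simpl; [reflexivity|].
  rewrite IH. specialize (H 0%nat); simpl in H; rewrite H; ring.
  intro k; apply (H (S k)).
Qed.

Lemma deval_expand l t : deval l t =
  nth 0 l 0 + t * (nth 1 l 0 + t * (nth 2 l 0 + t * (nth 3 l 0 + t * deval (skipn 4 l) t))).
Proof.
  destruct l as [|a0 [|a1 [|a2 [|a3 l]]]]; simpl; ring.
Qed.

Lemma deval_tail_zero l n : (forall k, (n <= k)%nat -> nth k l 0 = 0) ->
  forall t, deval (skipn n l) t = 0.
Proof.
  intros H t. apply deval_zero. intro k. rewrite nth_skipn. apply H. lia.
Qed.

Lemma deg1 q C : UPf q -> (forall t, 1 <= t -> Rabs (q t) <= C * t) ->
  forall t, q t = q 0 + (q 1 - q 0) * t.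
Proof.
  intros [l Hl] H.
  assert (Hz : forall k, (1 < k)%nat -> nth k l 0 = 0).
  { apply U1 with C. intros t Ht. rewrite <- Hl. rewrite pow_1. auto. }
  assert (Ht4 := deval_tail_zero l 4 ltac:(intros; apply Hz; lia)).
  assert (E : forall t, q t = nth 0 l 0 + nth 1 l 0 * t).
  { intro t. rewrite Hl, deval_expand, Ht4, (Hz 2%nat), (Hz 3%nat) by lia. ring. }
  intro t. rewrite !E. ring.
Qed.

Definition Lm (t : R) := t * (t - 1) / 2.
Definition L0 (t : R) := 1 - t ^ 2.
Definition Lp (t : R) := t * (t + 1) / 2.

Lemma deg2 q C : UPf q -> (forall t, 1 <= t -> Rabs (q t) <= C * t ^ 2) ->
  forall t, q t = q (-1) * Lm t + q 0 * L0 t + q 1 * Lp t.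
Proof.
  intros [l Hl] H.
  assert (Hz : forall k, (2 < k)%nat -> nth k l 0 = 0).
  { apply U1 with C. intros t Ht. rewrite <- Hl. auto. }
  assert (Ht4 := deval_tail_zero l 4 ltac:(intros; apply Hz; lia)).
  assert (E : forall t, q t = nth 0 l 0 + nth 1 l 0 * t + nth 2 l 0 * t ^ 2).
  { intro t. rewrite Hl, deval_expand, Ht4, (Hz 3%nat) by lia. ring. }
  intro t. rewrite !E. unfold Lm, L0, Lp. field.
Qed.

Lemma hom3 q C : UPf q -> (forall t, 1 <= t -> Rabs (q t) <= C * t ^ 3) ->
  (forall t, 0 < t <= 1 -> Rabs (q t) <= C * t ^ 3) ->
  forall t, q t = q 1 * t ^ 3.
Proof.
  intros [l Hl] H1 H2.
  assert (Hz : forall k, (3 < k)%nat -> nth k l 0 = 0).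
  { apply U1 with C. intros t Ht. rewrite <- Hl. auto. }
  assert (Hz' : forall k, (k < 3)%nat -> nth k l 0 = 0).
  { apply U2 with C. intros t Ht. rewrite <- Hl. auto. }
  assert (Ht4 := deval_tail_zero l 4 ltac:(intros; apply Hz; lia)).
  assert (E : forall t, q t = nth 3 l 0 * t ^ 3).
  { intro t. rewrite Hl, deval_expand, Ht4, (Hz' 0%nat), (Hz' 1%nat), (Hz' 2%nat) by lia. ring. }
  intro t. rewrite !E. ring.
Qed.

Lemma sq_bound q K r : q ^ 2 <= K * r ^ 2 -> 0 <= r -> Rabs q <= (Rabs K + 1) * r.
Proof.
  intros H Hr. destruct (Rle_lt_dec (Rabs q) ((Rabs K + 1) * r)) as [|Hl]; auto.
  exfalso. pose proof (Rabs_pos K). pose proof (Rle_abs K).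
  assert (q ^ 2 = Rabs q ^ 2) by (rewrite RPow_abs; rewrite Rabs_right; [auto| apply Rle_ge, pow2_ge_0]).
  assert (0 <= (Rabs K + 1) * r) by nra.
  assert (((Rabs K + 1) * r) ^ 2 < Rabs q ^ 2) by nra.
  nra.
Qed.

Lemma lin0 c d : (forall t, 0 < t <= 1 -> (c * t + d * t ^ 2) ^ 2 <= t ^ 4) -> c = 0.
Proof.
  intro H. apply small_zero with (1 + Rabs d). intros t Ht.
  specialize (H t Ht).
  assert (H' : (c + d * t) ^ 2 <= t ^ 2).
  { assert (0 < t ^ 2) by (apply pow_lt; lra).
    apply Rmult_le_reg_l with (t ^ 2); auto.
    replace (t ^ 2 * (c + d * t) ^ 2) with ((c * t + d * t ^ 2) ^ 2) by ring.
    replace (t ^ 2 * t ^ 2) with (t ^ 4) by ring. auto. }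
  assert (Rabs (c + d * t) <= t).
  { pose proof (sq_bound (c + d * t) 1 t ltac:(lra) ltac:(lra)).
    rewrite Rabs_R1 in H0.
    (* weaker: gives 2 t; redo directly *)
    destruct (Rle_lt_dec (Rabs (c + d * t)) t) as [|Hl]; auto. exfalso.
    assert (t ^ 2 < Rabs (c + d * t) ^ 2) by nra.
    rewrite RPow_abs, Rabs_right in H1 by (apply Rle_ge, pow2_ge_0). lra. }
  pose proof (Rabs_triang_inv c (- (d * t))).
  replace (c - - (d * t)) with (c + d * t) in H1 by ring.
  rewrite Rabs_Ropp, Rabs_mult, (Rabs_right t) in H1 by lra.
  nra.
Qed.


Definition Sf (x y z : R) := x^4*y^2 + y^4*z^2 + z^4*x^2 - 3*x^2*y^2*z^2.

Section BZ.
Variable B : R -> R -> R -> R.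
Hypothesis HL : forall x0 y0 z0 u v w, UPf (fun t => B (x0+u*t) (y0+v*t) (z0+w*t)).
Hypothesis HB : forall x y z, B x y z ^ 2 <= Sf x y z.

Lemma Bhom : forall l x y z x' y' z', x' = l*x -> y' = l*y -> z' = l*z ->
  B x' y' z' = l^3 * B x y z.
Proof.
  intros l x y z x' y' z' -> -> ->.
  set (q := fun t => B (0 + x*t) (0 + y*t) (0 + z*t)).
  assert (Hq : forall t, 0 < t -> Rabs (q t) <= (Rabs (Sf x y z) + 1) * t ^ 3).
  { intros t Ht. apply sq_bound; [|apply pow_le; lra].
    unfold q. eapply Rle_trans. apply HB. unfold Sf; right; ring. }
  assert (E := hom3 q _ (HL 0 0 0 x y z) (fun t Ht => Hq t ltac:(lra)) (fun t Ht => Hq t ltac:(lra)) l).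
  unfold q in E. replace (0 + x*1) with x in E by ring. replace (0 + y*1) with y in E by ring.
  replace (0 + z*1) with z in E by ring.
  replace (l*x) with (0 + x*l) by ring. replace (l*y) with (0 + y*l) by ring.
  replace (l*z) with (0 + z*l) by ring. rewrite E; ring.
Qed.

Lemma sq0 a : 0 <= a ^ 2. Proof. apply pow2_ge_0. Qed.
Lemma sq4 a : 0 <= a ^ 4. Proof. replace (a^4) with ((a^2)^2) by ring. apply pow2_ge_0. Qed.

Lemma Sf_bx y z t : 1 <= t -> Sf t y z <= (y^2 + y^4*z^2 + z^4) * t^4.
Proof.
  intro Ht. unfold Sf.
  assert (1 <= t^2) by (apply pow_R1_Rle; lra).
  assert (1 <= t^4) by (apply pow_R1_Rle; lra).
  assert (t^2 <= t^4) by (replace (t^4) with (t^2*t^2) by ring; nra).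
  pose proof (sq0 y); pose proof (sq0 z); pose proof (sq0 t); pose proof (sq4 y); pose proof (sq4 z).
  assert (0 <= y^4*z^2) by nra. assert (0 <= t^2*y^2*z^2) by (apply Rmult_le_pos; nra).
  assert (y^4*z^2 <= y^4*z^2*t^4) by nra. assert (z^4*t^2 <= z^4*t^4) by nra.
  nra.
Qed.

Lemma Sf_by x z t : 1 <= t -> Sf x t z <= (x^4 + z^2 + z^4*x^2) * t^4.
Proof.
  intro Ht. unfold Sf.
  assert (1 <= t^2) by (apply pow_R1_Rle; lra).
  assert (1 <= t^4) by (apply pow_R1_Rle; lra).
  assert (t^2 <= t^4) by (replace (t^4) with (t^2*t^2) by ring; nra).
  pose proof (sq0 x); pose proof (sq0 z); pose proof (sq0 t); pose proof (sq4 x); pose proof (sq4 z).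
  assert (0 <= z^4*x^2) by nra. assert (0 <= x^2*t^2*z^2) by (apply Rmult_le_pos; nra).
  assert (z^4*x^2 <= z^4*x^2*t^4) by nra. assert (x^4*t^2 <= x^4*t^4) by nra.
  nra.
Qed.

Lemma Sf_bz x y t : 1 <= t -> Sf x y t <= (x^4*y^2 + y^4 + x^2) * t^4.
Proof.
  intro Ht. unfold Sf.
  assert (1 <= t^2) by (apply pow_R1_Rle; lra).
  assert (1 <= t^4) by (apply pow_R1_Rle; lra).
  assert (t^2 <= t^4) by (replace (t^4) with (t^2*t^2) by ring; nra).
  pose proof (sq0 x); pose proof (sq0 y); pose proof (sq0 t); pose proof (sq4 x); pose proof (sq4 y).
  assert (0 <= x^4*y^2) by nra. assert (0 <= x^2*y^2*t^2) by (apply Rmult_le_pos; nra).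
  assert (x^4*y^2 <= x^4*y^2*t^4) by nra. assert (y^4*t^2 <= y^4*t^4) by nra.
  nra.
Qed.

Lemma Bx : forall y z t, B t y z = B (-1) y z * Lm t + B 0 y z * L0 t + B 1 y z * Lp t.
Proof.
  intros y z.
  set (q := fun t => B (0 + 1*t) (y + 0*t) (z + 0*t)).
  assert (Eq : forall t, q t = B t y z) by (intro; unfold q; f_equal; ring).
  assert (Hq : forall t, 1 <= t -> Rabs (q t) <= (Rabs (y^2 + y^4*z^2 + z^4) + 1) * t ^ 2).
  { intros t Ht. apply sq_bound; [|apply pow_le; lra].
    rewrite Eq. eapply Rle_trans. apply HB. eapply Rle_trans. apply Sf_bx; auto. right; ring. }
  intro t. rewrite <- !Eq. apply (deg2 q _ (HL 0 y z 1 0 0) Hq).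
Qed.

Lemma By : forall x z t, B x t z = B x (-1) z * Lm t + B x 0 z * L0 t + B x 1 z * Lp t.
Proof.
  intros x z.
  set (q := fun t => B (x + 0*t) (0 + 1*t) (z + 0*t)).
  assert (Eq : forall t, q t = B x t z) by (intro; unfold q; f_equal; ring).
  assert (Hq : forall t, 1 <= t -> Rabs (q t) <= (Rabs (x^4 + z^2 + z^4*x^2) + 1) * t ^ 2).
  { intros t Ht. apply sq_bound; [|apply pow_le; lra].
    rewrite Eq. eapply Rle_trans. apply HB. eapply Rle_trans. apply Sf_by; auto. right; ring. }
  intro t. rewrite <- !Eq. apply (deg2 q _ (HL x 0 z 0 1 0) Hq).
Qed.

Lemma Bz : forall x y t, B x y t = B x y (-1) * Lm t + B x y 0 * L0 t + B x y 1 * Lp t.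
Proof.
  intros x y.
  set (q := fun t => B (x + 0*t) (y + 0*t) (0 + 1*t)).
  assert (Eq : forall t, q t = B x y t) by (intro; unfold q; f_equal; ring).
  assert (Hq : forall t, 1 <= t -> Rabs (q t) <= (Rabs (x^4*y^2 + y^4 + x^2) + 1) * t ^ 2).
  { intros t Ht. apply sq_bound; [|apply pow_le; lra].
    rewrite Eq. eapply Rle_trans. apply HB. eapply Rle_trans. apply Sf_bz; auto. right; ring. }
  intro t. rewrite <- !Eq. apply (deg2 q _ (HL x y 0 0 0 1) Hq).
Qed.

Lemma Bzero x y z : Sf x y z = 0 -> B x y z = 0.
Proof. intro H. pose proof (HB x y z). rewrite H in H0. nra. Qed.

Lemma B110 : B 1 1 0 = 0.
Proof.
  assert (z1 : B (-1) (-1) (-1) = 0) by (apply Bzero; unfold Sf; ring).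
  assert (z2 : B (-1) (-1) 1 = 0) by (apply Bzero; unfold Sf; ring).
  assert (z3 : B (-1) 0 0 = 0) by (apply Bzero; unfold Sf; ring).
  assert (z4 : B (-1) 1 (-1) = 0) by (apply Bzero; unfold Sf; ring).
  assert (z5 : B (-1) 1 1 = 0) by (apply Bzero; unfold Sf; ring).
  assert (z6 : B 0 (-1) 0 = 0) by (apply Bzero; unfold Sf; ring).
  assert (z7 : B 0 0 (-1) = 0) by (apply Bzero; unfold Sf; ring).
  assert (z8 : B 0 0 0 = 0) by (apply Bzero; unfold Sf; ring).
  assert (z9 : B 0 0 1 = 0) by (apply Bzero; unfold Sf; ring).
  assert (z10 : B 0 1 0 = 0) by (apply Bzero; unfold Sf; ring).
  assert (z11 : B 1 (-1) (-1) = 0) by (apply Bzero; unfold Sf; ring).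
  assert (z12 : B 1 (-1) 1 = 0) by (apply Bzero; unfold Sf; ring).
  assert (z13 : B 1 0 0 = 0) by (apply Bzero; unfold Sf; ring).
  assert (z14 : B 1 1 (-1) = 0) by (apply Bzero; unfold Sf; ring).
  assert (z15 : B 1 1 1 = 0) by (apply Bzero; unfold Sf; ring).
  assert (o1 : B 1 1 0 = - B (-1) (-1) 0) by (rewrite (Bhom (-1) (-1) (-1) 0); [ring|lra|lra|lra]).
  assert (o2 : B 1 0 1 = - B (-1) 0 (-1)) by (rewrite (Bhom (-1) (-1) 0 (-1)); [ring|lra|lra|lra]).
  assert (o3 : B 1 0 (-1) = - B (-1) 0 1) by (rewrite (Bhom (-1) (-1) 0 1); [ring|lra|lra|lra]).
  assert (o4 : B 1 (-1) 0 = - B (-1) 1 0) by (rewrite (Bhom (-1) (-1) 1 0); [ring|lra|lra|lra]).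
  assert (o5 : B 0 1 1 = - B 0 (-1) (-1)) by (rewrite (Bhom (-1) 0 (-1) (-1)); [ring|lra|lra|lra]).
  assert (o6 : B 0 1 (-1) = - B 0 (-1) 1) by (rewrite (Bhom (-1) 0 (-1) 1); [ring|lra|lra|lra]).
  pose proof (Bx 2 2 2) as i0.
  pose proof (Bx 2 1 2) as i1.
  pose proof (Bz 1 1 (1/2)) as i2.
  pose proof (Bx 1 1 (1/2)) as i3.
  pose proof (By (-1) 2 2) as i4.
  pose proof (By (-1) 1 2) as i5.
  pose proof (Bz (-1) (-1) 2) as i6.
  pose proof (Bz (-1) 0 2) as i7.
  pose proof (Bz (-1) 1 2) as i8.
  pose proof (By 0 2 2) as i9.
  pose proof (By 0 1 2) as i10.
  pose proof (Bz 0 (-1) 2) as i11.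
  pose proof (Bz 0 0 2) as i12.
  pose proof (Bz 0 1 2) as i13.
  pose proof (By 1 2 2) as i14.
  pose proof (By 1 1 2) as i15.
  pose proof (Bz 1 (-1) 2) as i16.
  pose proof (Bz 1 0 2) as i17.
  pose proof (Bz 1 1 2) as i18.
  assert (h1 : B 2 2 2 = 2^3 * B 1 1 1) by (apply Bhom; lra).
  assert (h2 : B 2 2 1 = 2^3 * B 1 1 (1/2)) by (apply Bhom; lra).
  assert (h3 : B 1 2 2 = 2^3 * B (1/2) 1 1) by (apply Bhom; lra).
  assert (p1 : (B 1 1 0 - B (-1) 1 0) / 2 = 0).
  { apply lin0 with ((B 1 1 0 + B (-1) 1 0) / 2). intros t Ht.
    replace ((B 1 1 0 - B (-1) 1 0) / 2 * t + (B 1 1 0 + B (-1) 1 0) / 2 * t ^ 2) with (B t 1 0).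
    eapply Rle_trans. apply HB. unfold Sf; right; ring.
    rewrite (Bx 1 0 t), (Bzero 0 1 0) by (unfold Sf; ring). unfold Lm, L0, Lp; field. }
  assert (p2 : (B 0 1 1 - B 0 (-1) 1) / 2 = 0).
  { apply lin0 with ((B 0 1 1 + B 0 (-1) 1) / 2). intros t Ht.
    replace ((B 0 1 1 - B 0 (-1) 1) / 2 * t + (B 0 1 1 + B 0 (-1) 1) / 2 * t ^ 2) with (B 0 t 1).
    eapply Rle_trans. apply HB. unfold Sf; right; ring.
    rewrite (By 0 1 t), (Bzero 0 0 1) by (unfold Sf; ring). unfold Lm, L0, Lp; field. }
  assert (p3 : (B 1 0 1 - B 1 0 (-1)) / 2 = 0).
  { apply lin0 with ((B 1 0 1 + B 1 0 (-1)) / 2). intros t Ht.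
    replace ((B 1 0 1 - B 1 0 (-1)) / 2 * t + (B 1 0 1 + B 1 0 (-1)) / 2 * t ^ 2) with (B 1 0 t).
    eapply Rle_trans. apply HB. unfold Sf; right; ring.
    rewrite (Bz 1 0 t), (Bzero 1 0 0) by (unfold Sf; ring). unfold Lm, L0, Lp; field. }
  unfold Lm, L0, Lp in *. simpl in h1, h2, h3.
  lra.
Qed.

End BZ.


Lemma monom_ext T a x y : (forall i, In i T -> x i = y i) -> monom T a x = monom T a y.
Proof.
  induction T as [|j T IH]; intro H; simpl; auto.
  rewrite H by (left; auto). rewrite IH; auto. intros i Hi; apply H; right; auto.
Qed.

Lemma peval_ext T p x y : (forall i, In i T -> x i = y i) -> peval T p x = peval T p y.
Proof.
  induction p as [|c p IH]; intro H; simpl; auto.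
  rewrite (monom_ext T (snd c) x y H), IH; auto.
Qed.

Lemma monom_line T e (a b : point) : UPf (fun t => monom T e (fun i => a i + b i * t)).
Proof.
  induction T as [|j T IH]; simpl.
  - apply UPf_const.
  - apply UPf_mul; auto. apply UPf_pow. apply UPf_lin.
Qed.

Lemma peval_line T p (a b : point) : UPf (fun t => peval T p (fun i => a i + b i * t)).
Proof.
  induction p as [|c p IH]; simpl.
  - apply UPf_const.
  - apply UPf_add; auto. apply UPf_mul; [apply UPf_const|apply monom_line].
Qed.

Lemma pd_ext T d g x y : is_poly_deg T d g -> (forall i, In i T -> x i = y i) -> g x = g y.
Proof. intros [p [_ Hp]] H. rewrite !Hp. apply peval_ext; auto. Qed.

Lemma pd_line T d g (a b : point) : is_poly_deg T d g -> UPf (fun t => g (fun i => a i + b i * t)).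
Proof. intros [p [_ Hp]]. apply UPf_ext with (fun t => peval T p (fun i => a i + b i * t)).
  intro; auto. apply peval_line. Qed.

Definition sumsq {A} (F : A -> R) (l : list A) : R := fold_right (fun a acc => F a ^ 2 + acc) 0 l.

Lemma sumsq_in {A} (F : A -> R) l a : In a l -> F a ^ 2 <= sumsq F l.
Proof.
  induction l as [|b l IH]; simpl; [tauto|]. intros [->|H].
  - assert (0 <= sumsq F l) by (clear IH; induction l; simpl; [lra|]; pose proof (pow2_ge_0 (F a0)); lra). lra.
  - pose proof (IH H). pose proof (pow2_ge_0 (F b)). lra.
Qed.

Lemma sumsq_ext {A} (F G : A -> R) l : (forall a, In a l -> F a = G a) -> sumsq F l = sumsq G l.
Proof.
  induction l as [|b l IH]; simpl; intro H; auto. rewrite H by auto. rewrite IH; auto.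
Qed.

Lemma sumsq_zero {A} (F : A -> R) l : (forall a, In a l -> F a = 0) -> sumsq F l = 0.
Proof.
  induction l as [|b l IH]; simpl; intro H; auto. rewrite H by auto. rewrite IH; auto. ring.
Qed.

Lemma sumsq_par {A} (F0 F1 Fm D : A -> R) l :
  (forall a, In a l -> F1 a = F0 a + D a /\ Fm a = F0 a - D a) ->
  sumsq F1 l + sumsq Fm l - 2 * sumsq F0 l = 2 * sumsq D l.
Proof.
  induction l as [|b l IH]; simpl; intro H; [ring|].
  destruct (H b (or_introl eq_refl)) as [E1 E2]. rewrite E1, E2.
  assert (IH' := IH (fun a Ha => H a (or_intror Ha))). nra.
Qed.

Definition upd (x : point) (k : nat) (v : R) : point := fun i => if Nat.eqb i k then v else x i.
Definition pt (x y z : R) : point := fun i =>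
  match i with 1%nat => x | 2%nat => y | 3%nat => z | _ => 0 end.

Lemma part2 : ~ exists s1 s2 : point -> R,
       SOS I1 s1 /\ SOS I2 s2 /\ forall x, fpoly x = s1 x + s2 x.
Proof.
  intros [s1 [s2 [[t1 [gs [Hgs Hs1]]] [[t2 [hs [Hhs Hs2]]] Hf]]]].
  rewrite Forall_forall in Hgs, Hhs.
  assert (s2ext : forall x y, x 1%nat = y 1%nat -> x 2%nat = y 2%nat -> x 3%nat = y 3%nat ->
     x 5%nat = y 5%nat -> s2 x = s2 y).
  { intros x y E1 E2 E3 E5. rewrite !Hs2. change (sumsq (fun g => g x) hs = sumsq (fun g => g y) hs).
    apply sumsq_ext. intros h Hh. apply (pd_ext _ _ _ _ _ (Hhs h Hh)).
    intros i Hi; simpl in Hi; intuition subst; auto. }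
  assert (s1ext : forall x y, x 1%nat = y 1%nat -> x 2%nat = y 2%nat -> x 3%nat = y 3%nat ->
     x 4%nat = y 4%nat -> s1 x = s1 y).
  { intros x y E1 E2 E3 E5. rewrite !Hs1. change (sumsq (fun g => g x) gs = sumsq (fun g => g y) gs).
    apply sumsq_ext. intros h Hh. apply (pd_ext _ _ _ _ _ (Hgs h Hh)).
    intros i Hi; simpl in Hi; intuition subst; auto. }
  assert (key : forall x t, sumsq (fun g => g (upd x 4 t)) gs =
     t ^ 2 * Sf (x 1%nat) (x 2%nat) (x 3%nat) + (x 3%nat ^ 8 - s2 (upd x 5 0))).
  { intros x t. change (sumsq (fun g => g (upd x 4 t)) gs) with
       (fold_right (fun g acc => g (upd x 4 t) ^ 2 + acc) 0 gs).
    rewrite <- Hs1.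
    rewrite (s1ext (upd x 4 t) (upd (upd x 4 t) 5 0)) by reflexivity.
    rewrite (s2ext (upd x 5 0) (upd (upd x 4 t) 5 0)) by reflexivity.
    pose proof (Hf (upd (upd x 4 t) 5 0)) as E.
    assert (fpoly (upd (upd x 4 t) 5 0) = t ^ 2 * Sf (x 1%nat) (x 2%nat) (x 3%nat) + x 3%nat ^ 8).
    { unfold fpoly, f1, f2, upd, Sf; simpl. ring. }
    lra. }
  assert (gext : forall g, In g gs -> forall x y, (forall i, x i = y i) -> g x = g y).
  { intros g Hg x y H. apply (pd_ext _ _ _ _ _ (Hgs g Hg)). auto. }
  assert (aff : forall g, In g gs -> forall x t,
     g (upd x 4 t) = g (upd x 4 0) + (g (upd x 4 1) - g (upd x 4 0)) * t).
  { intros g Hg x.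
    set (S := Sf (x 1%nat) (x 2%nat) (x 3%nat)). set (E := x 3%nat ^ 8 - s2 (upd x 5 0)).
    set (q := fun t => g (upd x 4 t)).
    change (forall t, q t = q 0 + (q 1 - q 0) * t).
    apply deg1 with (Rabs (Rabs S + Rabs E) + 1).
    - apply UPf_ext with (fun t => g (fun i => (upd x 4 0) i + (fun i => if Nat.eqb i 4 then 1 else 0) i * t)).
      + intro t; unfold q; apply gext; auto. intro i; unfold upd; destruct (Nat.eqb i 4); ring.
      + apply (pd_line _ _ _ _ _ (Hgs g Hg)).
    - intros t Ht. apply sq_bound; [|lra].
      eapply Rle_trans. apply (sumsq_in (fun g => g (upd x 4 t)) gs g Hg).
      rewrite key. fold S E.
      assert (1 <= t^2) by (apply pow_R1_Rle; lra).
      pose proof (Rle_abs S); pose proof (Rle_abs E); pose proof (Rabs_pos E). nra. }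
  set (Bg := fun g x y z => g (upd (pt x y z) 4 1) - g (upd (pt x y z) 4 0)).
  assert (Hsum : forall x y z, sumsq (fun g => Bg g x y z) gs = Sf x y z).
  { intros x y z.
    assert (E := sumsq_par (fun g => g (upd (pt x y z) 4 0)) (fun g => g (upd (pt x y z) 4 1))
       (fun g => g (upd (pt x y z) 4 (-1))) (fun g => Bg g x y z) gs).
    rewrite !key in E. simpl in E.
    assert (2 * sumsq (fun g => Bg g x y z) gs = 2 * Sf x y z).
    { rewrite <- E. ring. intros g Hg. unfold Bg. rewrite (aff g Hg _ (-1)). split; ring. }
    lra. }
  assert (Hz : forall g, In g gs -> Bg g 1 1 0 = 0).
  { intros g Hg. apply (B110 (Bg g)).
    - intros x0 y0 z0 u v w. unfold Bg. apply UPf_sub.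
      + apply UPf_ext with (fun t => g (fun i => (upd (pt x0 y0 z0) 4 1) i + (upd (pt u v w) 4 0) i * t)).
        intro t; apply gext; auto. intro i; unfold upd, pt.
        destruct i as [|[|[|[|[|i]]]]]; simpl; ring.
        apply (pd_line _ _ _ _ _ (Hgs g Hg)).
      + apply UPf_ext with (fun t => g (fun i => (upd (pt x0 y0 z0) 4 0) i + (upd (pt u v w) 4 0) i * t)).
        intro t; apply gext; auto. intro i; unfold upd, pt.
        destruct i as [|[|[|[|[|i]]]]]; simpl; ring.
        apply (pd_line _ _ _ _ _ (Hgs g Hg)).
    - intros x y z. rewrite <- Hsum. apply (sumsq_in (fun g => Bg g x y z) gs g Hg). }
  pose proof (Hsum 1 1 0). rewrite sumsq_zero in H by auto. unfold Sf in H. lra.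
Qed.


Definition ex (l : list nat) : nat -> nat := fun i => nth i l 0%nat.
Definition P1 : list (list (R * (nat -> nat))) := [
  [((-1), ex [0;2;1;2;1;0]%nat); ((1), ex [0;4;1;0;1;0]%nat)];
  [((1), ex [0;1;3;1;1;0]%nat); ((-1), ex [0;3;1;1;1;0]%nat)];
  [((1), ex [0;2;0;3;1;0]%nat); ((-1), ex [0;2;2;1;1;0]%nat)];
  [((-1/2), ex [0;1;2;2;1;0]%nat); ((1/2), ex [0;3;2;0;1;0]%nat)];
  [((-1/2), ex [0;1;2;2;1;0]%nat); ((1/2), ex [0;3;2;0;1;0]%nat)];
  [((1/2), ex [0;1;2;2;1;0]%nat); ((-1/2), ex [0;3;0;2;1;0]%nat)];
  [((1/2), ex [0;1;2;2;1;0]%nat); ((-1/2), ex [0;3;0;2;1;0]%nat)];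
  [((1/2), ex [0;3;0;2;1;0]%nat); ((-1/2), ex [0;3;2;0;1;0]%nat)];
  [((1/2), ex [0;3;0;2;1;0]%nat); ((-1/2), ex [0;3;2;0;1;0]%nat)];
  [((-1), ex [0;1;2;2;1;0]%nat); ((1), ex [0;3;2;0;1;0]%nat)];
  [((1), ex [0;0;4;1;1;0]%nat); ((-1), ex [0;2;2;1;1;0]%nat)];
  [((1), ex [0;1;1;3;1;0]%nat); ((-1), ex [0;1;3;1;1;0]%nat)];
  [((-1/2), ex [0;0;3;2;1;0]%nat); ((1/2), ex [0;2;3;0;1;0]%nat)];
  [((-1/2), ex [0;0;3;2;1;0]%nat); ((1/2), ex [0;2;3;0;1;0]%nat)];
  [((1/2), ex [0;0;3;2;1;0]%nat); ((-1/2), ex [0;2;1;2;1;0]%nat)];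
  [((1/2), ex [0;0;3;2;1;0]%nat); ((-1/2), ex [0;2;1;2;1;0]%nat)];
  [((1/2), ex [0;2;1;2;1;0]%nat); ((-1/2), ex [0;2;3;0;1;0]%nat)];
  [((1/2), ex [0;2;1;2;1;0]%nat); ((-1/2), ex [0;2;3;0;1;0]%nat)];
  [((-1), ex [0;1;1;3;1;0]%nat); ((1), ex [0;3;1;1;1;0]%nat)];
  [((1), ex [0;0;3;2;1;0]%nat); ((-1), ex [0;2;1;2;1;0]%nat)];
  [((1), ex [0;1;0;4;1;0]%nat); ((-1), ex [0;1;2;2;1;0]%nat)];
  [((-1/2), ex [0;0;2;3;1;0]%nat); ((1/2), ex [0;2;2;1;1;0]%nat)];
  [((-1/2), ex [0;0;2;3;1;0]%nat); ((1/2), ex [0;2;2;1;1;0]%nat)];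
  [((1/2), ex [0;0;2;3;1;0]%nat); ((-1/2), ex [0;2;0;3;1;0]%nat)];
  [((1/2), ex [0;0;2;3;1;0]%nat); ((-1/2), ex [0;2;0;3;1;0]%nat)];
  [((1/2), ex [0;2;0;3;1;0]%nat); ((-1/2), ex [0;2;2;1;1;0]%nat)];
  [((1/2), ex [0;2;0;3;1;0]%nat); ((-1/2), ex [0;2;2;1;1;0]%nat)];
  [((-1), ex [0;1;1;2;2;0]%nat); ((1), ex [0;3;1;0;2;0]%nat)];
  [((1), ex [0;0;3;1;2;0]%nat); ((-1), ex [0;2;1;1;2;0]%nat)];
  [((1), ex [0;1;0;3;2;0]%nat); ((-1), ex [0;1;2;1;2;0]%nat)];
  [((-1/2), ex [0;0;2;2;2;0]%nat); ((1/2), ex [0;2;2;0;2;0]%nat)];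
  [((-1/2), ex [0;0;2;2;2;0]%nat); ((1/2), ex [0;2;2;0;2;0]%nat)];
  [((1/2), ex [0;0;2;2;2;0]%nat); ((-1/2), ex [0;2;0;2;2;0]%nat)];
  [((1/2), ex [0;0;2;2;2;0]%nat); ((-1/2), ex [0;2;0;2;2;0]%nat)];
  [((1/2), ex [0;2;0;2;2;0]%nat); ((-1/2), ex [0;2;2;0;2;0]%nat)];
  [((1/2), ex [0;2;0;2;2;0]%nat); ((-1/2), ex [0;2;2;0;2;0]%nat)];
  [((1), ex [0;2;0;4;0;0]%nat)];
  [((1), ex [0;1;1;4;0;0]%nat)];
  [((1), ex [0;1;0;5;0;0]%nat)];
  [((1), ex [0;1;0;4;1;0]%nat)];
  [((1), ex [0;1;1;4;0;0]%nat)];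
  [((1), ex [0;0;2;4;0;0]%nat)];
  [((1), ex [0;0;1;5;0;0]%nat)];
  [((1), ex [0;0;1;4;1;0]%nat)];
  [((1), ex [0;1;0;5;0;0]%nat)];
  [((1), ex [0;0;1;5;0;0]%nat)];
  [((1), ex [0;0;0;6;0;0]%nat)];
  [((1), ex [0;0;0;5;1;0]%nat)]].
Definition P2 : list (list (R * (nat -> nat))) := [
  [((1), ex [0;3;1;1;0;1]%nat)];
  [((1), ex [0;2;2;1;0;1]%nat)];
  [((1), ex [0;2;1;2;0;1]%nat)];
  [((1), ex [0;2;1;1;0;2]%nat)];
  [((1), ex [0;2;2;1;0;1]%nat)];
  [((1), ex [0;1;3;1;0;1]%nat)];
  [((1), ex [0;1;2;2;0;1]%nat)];
  [((1), ex [0;1;2;1;0;2]%nat)];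
  [((1), ex [0;2;1;2;0;1]%nat)];
  [((1), ex [0;1;2;2;0;1]%nat)];
  [((1), ex [0;1;1;3;0;1]%nat)];
  [((1), ex [0;1;1;2;0;2]%nat)]].

Definition chk T d (P : list (list (R * (nat -> nat)))) : bool :=
  forallb (fun p => forallb (fun c => Nat.leb (mdeg T (snd c)) d) p) P.

Lemma chk_ok T d P : chk T d P = true -> Forall (is_poly_deg T d) (map (peval T) P).
Proof.
  unfold chk. intro H. rewrite forallb_forall in H. apply Forall_forall.
  intros g Hg. apply in_map_iff in Hg. destruct Hg as [p [<- Hp]].
  exists p. split; auto. apply Forall_forall. intros c Hc.
  specialize (H p Hp). rewrite forallb_forall in H. specialize (H c Hc).
  apply Nat.leb_le; auto.
Qed.

Lemma part3 : exists s1 s2 : point -> R,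
     SOS_deg I1 6 s1 /\ SOS_deg I2 6 s2 /\
     forall x, H1 x <> 0 -> H2 x <> 0 -> fpoly x = s1 x / H1 x + s2 x / H2 x.
Proof.
  exists (fun x => f1 x * H1 x), (fun x => f2 x * H2 x). split; [|split].
  - exists (map (peval I1) P1). split. apply chk_ok; vm_compute; reflexivity.
    intro x. unfold P1, f1, H1, peval, monom, ex, I1; simpl. field.
  - exists (map (peval I2) P2). split. apply chk_ok; vm_compute; reflexivity.
    intro x. unfold P2, f2, H2, peval, monom, ex, I2; simpl. ring.
  - intros x h1 h2. unfold fpoly. field. auto.
Qed.


Lemma Sf_nonneg x y z : 0 <= Sf x y z.
Proof.
  set (Q := x^2 + y^2 + z^2).
  assert (E : Q * Sf x y z = (x^3*y - x*y*z^2)^2 + (y^3*z - x^2*y*z)^2 + (z^3*x - x*y^2*z)^2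
     + (1/2) * (x^2*y^2 - y^2*z^2)^2 + (1/2) * (y^2*z^2 - z^2*x^2)^2 + (1/2) * (z^2*x^2 - x^2*y^2)^2).
  { unfold Q, Sf. field. }
  assert (Hs : 0 <= Q * Sf x y z).
  { rewrite E. repeat apply Rplus_le_le_0_compat; try apply pow2_ge_0;
    apply Rmult_le_pos; try lra; apply pow2_ge_0. }
  pose proof (pow2_ge_0 x); pose proof (pow2_ge_0 y); pose proof (pow2_ge_0 z).
  destruct (Req_dec Q 0) as [HQ|HQ].
  - assert (x = 0) by (unfold Q in HQ; nra). assert (y = 0) by (unfold Q in HQ; nra).
    assert (z = 0) by (unfold Q in HQ; nra). subst. unfold Sf; lra.
  - assert (0 < Q) by (unfold Q in *; lra).
    apply Rmult_le_reg_l with Q; auto. lra.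
Qed.

Theorem mainTheorem8 :
  ((is_poly_deg [1; 2; 3; 4; 5]%nat 8 fpoly /\
    (forall (l : R) (x : point), fpoly (fun i => l * x i) = l ^ 8 * fpoly x) /\
    (exists x : point, fpoly x <> 0)) /\
   (forall x : point, 0 <= fpoly x) /\
   ~ pos_def fpoly) /\
  (~ exists s1 s2 : point -> R,
       SOS I1 s1 /\ SOS I2 s2 /\ forall x, fpoly x = s1 x + s2 x) /\
  (exists s1 s2 : point -> R,
     SOS_deg I1 6 s1 /\ SOS_deg I2 6 s2 /\
     forall x, H1 x <> 0 -> H2 x <> 0 -> fpoly x = s1 x / H1 x + s2 x / H2 x).
Proof.
  split; [|split; [exact part2 | exact part3]].
  split; [split; [|split]|split].
  - exists [(1, ex [0;4;2;0;2;0]%nat); (1, ex [0;0;4;2;2;0]%nat); (1, ex [0;2;0;4;2;0]%nat);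
            (-3, ex [0;2;2;2;2;0]%nat); (1, ex [0;0;0;8;0;0]%nat); (1, ex [0;2;2;2;0;2]%nat)].
    split.
    + repeat (apply Forall_cons; [cbn; lia|]). apply Forall_nil.
    + intro x. unfold fpoly, f1, f2, peval, monom, ex; simpl. ring.
  - intros l x. unfold fpoly, f1, f2. ring.
  - exists (fun _ => 1). unfold fpoly, f1, f2. lra.
  - intro x. unfold fpoly, f1, f2.
    pose proof (Sf_nonneg (x 1%nat) (x 2%nat) (x 3%nat)). unfold Sf in H.
    assert (0 <= x 4%nat ^ 2) by apply pow2_ge_0.
    assert (0 <= x 3%nat ^ 8) by (replace (x 3%nat ^ 8) with ((x 3%nat ^ 4)^2) by ring; apply pow2_ge_0).
    assert (0 <= x 1%nat ^ 2 * x 2%nat ^ 2 * x 3%nat ^ 2 * x 5%nat ^ 2).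
    { replace (x 1%nat ^ 2 * x 2%nat ^ 2 * x 3%nat ^ 2 * x 5%nat ^ 2) with
        ((x 1%nat * x 2%nat * x 3%nat * x 5%nat)^2) by ring. apply pow2_ge_0. }
    assert (0 <= x 4%nat ^ 2 * (x 1%nat ^ 4 * x 2%nat ^ 2 + x 2%nat ^ 4 * x 3%nat ^ 2 +
      x 1%nat ^ 2 * x 3%nat ^ 4 - 3 * x 1%nat ^ 2 * x 2%nat ^ 2 * x 3%nat ^ 2)).
    { apply Rmult_le_pos; auto. replace (x 1%nat ^ 2 * x 3%nat ^ 4) with (x 3%nat ^ 4 * x 1%nat ^ 2) by ring.
      replace (3 * x 1%nat ^ 2 * x 2%nat ^ 2 * x 3%nat ^ 2) with (3 * x 1%nat ^ 2 * x 2%nat ^ 2 * x 3%nat ^ 2) by ring.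
      lra. }
    lra.
  - intro H. set (x := fun i : nat => if Nat.eqb i 1 then 1 else 0).
    assert (Hx : nonzero5 x) by (exists 1%nat; split; [lia|]; unfold x; simpl; lra).
    specialize (H x Hx). unfold fpoly, f1, f2, x in H; simpl in H. lra.
Qed.
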